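(* Let $p:=\frac1{2\sqrt2}$ and $c:=\frac34$, and for $\alpha\in\mathbb R$, $q,C>0$, $n>0$ let $$X_{qC\alpha}(n):=\int_q^{+\infty}d\rho\,\rho^\alpha(1+\rho^2)^ne^{-n\frac{(\rho-q)^2}{C}}.$$ Then for fixed $\alpha\in\mathbb R$ and $n\to+\infty$, $$X_{pc\alpha}(n)=\frac{3\sqrt{\pi/5}}{2^{\alpha/2+1/2}}\,\frac{(3/2)^n}{e^{n/6}\sqrt n}\Big[1+O(\tfrac1n)\Big],\qquad X_{2p,2c,\alpha}(n)=3\sqrt{\pi/7}\,2^{\alpha/2}\,\frac{3^n}{e^{n/3}\sqrt n}\Big[1+O(\tfrac1n)\Big].$$ *)

(* Defs.v *)
From Stdlib Require Import Reals.
From Coquelicot Require Import Coquelicot.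
Open Scope R_scope.

Definition Xintegrand (q C alpha n : R) (rho : R) : R :=
  Rpower rho alpha * Rpower (1 + rho ^ 2) n * exp (- n * (rho - q) ^ 2 / C).

Definition X (q C alpha n : R) : R :=
  RInt_gen (Xintegrand q C alpha n) (at_point q) (Rbar_locally p_infty).

Definition X_conv (q C alpha n : R) : Prop :=
  ex_RInt_gen (Xintegrand q C alpha n) (at_point q) (Rbar_locally p_infty).

Definition X_asymp (q C alpha : R) (M : R -> R) : Prop :=
  exists K N : R, 0 < N /\
    forall n : R, N <= n ->
      X_conv q C alpha n /\
      exists r : R, Rabs r <= K / n /\ X q C alpha n = M n * (1 + r).

Definition p : R := 1 / (2 * sqrt 2).
Definition c : R := 3 / 4.

(* Main.v *)
Require Import Defs.
From Stdlib Require Import Reals Lra Psatz Classical.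
From Coquelicot Require Import Coquelicot.
Open Scope R_scope.

Lemma exp_le x y : x <= y -> exp x <= exp y.
Proof. intros H. destruct (Rle_lt_or_eq_dec _ _ H). left; apply exp_increasing; auto. subst; lra. Qed.
Lemma abs_le y a : Rabs y <= a -> -a <= y <= a.
Proof. unfold Rabs; destruct Rcase_abs; lra. Qed.
Lemma abs_le_intro y a : -a <= y <= a -> Rabs y <= a.
Proof. unfold Rabs; destruct Rcase_abs; lra. Qed.




Lemma mvt_bound (f df : R -> R) (x M : R) :
  (forall y, Rabs y <= Rabs x -> is_derive f y (df y)) ->
  (forall y, Rabs y <= Rabs x -> Rabs (df y) <= M) ->
  Rabs (f x - f 0) <= M * Rabs x.
Proof.
intros Hd Hb.
assert (Hin : forall y, Rmin 0 x <= y <= Rmax 0 x -> Rabs y <= Rabs x).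
{ intros y [H1 H2]. unfold Rmin, Rmax in *. destruct (Rle_dec 0 x);
  unfold Rabs; repeat destruct Rcase_abs; lra. }
destruct (MVT_gen f 0 x df) as [c [Hc Heq]].
- intros y Hy. apply Hd, Hin. lra.
- intros y Hy. apply continuity_pt_filterlim. apply (ex_derive_continuous (K:=R_AbsRing) (V:=R_NormedModule)).
  eexists; apply Hd, Hin; auto.
- rewrite Heq. rewrite Rabs_mult. replace (x - 0) with x by ring.
  apply Rmult_le_compat_r. apply Rabs_pos. apply Hb, Hin; auto.
Qed.

Lemma ln3_bound s : Rabs s <= 1/2 ->
  Rabs (ln (1+s) - s + s^2/2 - s^3/3) <= 2 * s^4.
Proof.
intros Hs.
assert (H := mvt_bound (fun x => ln (1+x) - x + x^2/2 - x^3/3) (fun x => - x^3/(1+x)) s (2 * Rabs s ^ 3)).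
cbv beta in H. assert (E : ln (1 + 0) - 0 + 0 ^ 2 / 2 - 0 ^ 3 / 3 = 0).
{ replace (1+0) with 1 by ring. rewrite ln_1. field. }
rewrite E, Rminus_0_r in H.
replace (2 * s^4) with (2 * Rabs s ^3 * Rabs s).
2:{ replace (s^4) with (Rabs s ^ 4). ring. rewrite RPow_abs. apply Rabs_right. apply Rle_ge. replace (s^4) with ((s^2)^2) by ring. apply pow2_ge_0. }
apply H.
- intros y Hy. assert (Hy2 : Rabs y <= 1/2) by lra. assert (-1/2 <= y) by (apply abs_le in Hy2; lra).
  auto_derive. lra. field. lra.
- intros y Hy. assert (Hy2 : Rabs y <= 1/2) by lra. assert (Ry : -1/2 <= y <= 1/2) by (apply abs_le in Hy2; lra).
  unfold Rdiv. rewrite Rabs_mult, Rabs_Ropp, Rabs_inv, <- RPow_abs.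
  rewrite (Rabs_right (1+y)) by lra.
  assert (0 <= Rabs y ^ 3 <= Rabs s ^ 3).
  { split. apply pow_le, Rabs_pos. apply pow_incr. split; auto. apply Rabs_pos. }
  assert (/ (1+y) <= 2). { apply (Rmult_le_reg_r (1+y)). lra. rewrite Rinv_l by lra. lra. }
  assert (0 < / (1+y)) by (apply Rinv_0_lt_compat; lra).
  nra.
Qed.

Lemma ln1_bound u : Rabs u <= 1/2 -> Rabs (ln (1+u)) <= 2 * Rabs u.
Proof.
intros Hs.
assert (H := mvt_bound (fun x => ln (1+x)) (fun x => /(1+x)) u 2).
cbv beta in H. replace (ln (1+0)) with 0 in H by (replace (1+0) with 1 by ring; rewrite ln_1; auto).
rewrite Rminus_0_r in H. apply H.
- intros y Hy. assert (Hy2 : Rabs y <= 1/2) by lra. assert (-1/2 <= y) by (apply abs_le in Hy2; lra).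
  auto_derive. lra. field. lra.
- intros y Hy. assert (Hy2 : Rabs y <= 1/2) by lra. assert (Ry : -1/2 <= y <= 1/2) by (apply abs_le in Hy2; lra).
  rewrite Rabs_right. apply (Rmult_le_reg_r (1+y)). lra. rewrite Rinv_l by lra. lra.
  left; apply Rinv_0_lt_compat; lra.
Qed.

Lemma exp1_bound y : Rabs (exp y - 1) <= Rabs y * exp (Rabs y).
Proof.
assert (H := mvt_bound exp exp y (exp (Rabs y))).
rewrite exp_0 in H. rewrite Rmult_comm. apply H.
- intros z _. apply is_derive_Reals, derivable_pt_lim_exp.
- intros z Hz. rewrite Rabs_right by (left; apply exp_pos). apply exp_le.
  apply abs_le in Hz; lra.
Qed.

Lemma exp2_bound y : Rabs (exp y - 1 - y) <= y^2 * exp (Rabs y).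
Proof.
assert (H := mvt_bound (fun x => exp x - 1 - x) (fun x => exp x - 1) y (Rabs y * exp (Rabs y))).
cbv beta in H. rewrite exp_0 in H. replace (1 - 1 - 0) with 0 in H by ring. rewrite Rminus_0_r in H.
replace (y^2 * exp (Rabs y)) with (Rabs y * exp (Rabs y) * Rabs y).
2:{ replace (y^2) with (Rabs y * Rabs y). ring. rewrite <- Rabs_mult. simpl. rewrite Rmult_1_r.
    apply Rabs_right. nra. }
apply H.
- intros z _. auto_derive. auto. ring.
- intros z Hz. apply Rle_trans with (Rabs z * exp (Rabs z)). apply exp1_bound.
  apply Rmult_le_compat; auto. apply Rabs_pos. left; apply exp_pos. apply exp_le; auto.
Qed.



Definition gI (x : R) : R := RInt (fun t => exp (-(t*t))) 0 x.
Definition gfu (u t : R) : R := exp (-(u*u)*(1+t*t)) / (1+t*t).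
Definition gU (x : R) : R := RInt (fun t => gfu x t) 0 1.

Lemma gauss_cont : forall t, continuous (fun t => exp (-(t*t))) t.
Proof.
intros t. apply (ex_derive_continuous (fun t => exp (-(t*t)))). auto_derive. auto.
Qed.

Lemma gI_derive x : is_derive gI x (exp (-(x*x))).
Proof.
apply (is_derive_RInt (fun t => exp (-(t*t))) gI 0 x).
- apply filter_forall. intros b. unfold gI.
  apply (RInt_correct (V := R_CompleteNormedModule)). apply ex_RInt_continuous.
  intros; apply gauss_cont.
- apply gauss_cont.
Qed.

Lemma gfu_derive u t : is_derive (fun z => gfu z t) u (-2 * u * exp (-(u*u)*(1+t*t))).
Proof.
unfold gfu. assert (0 < 1 + t*t) by nra.
auto_derive. lra. field. lra.
Qed.

Lemma gfu_cont u t : continuous (fun t => gfu u t) t.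
Proof.
unfold gfu. assert (0 < 1 + t*t) by nra.
apply (ex_derive_continuous (fun t => exp (-(u*u)*(1+t*t)) / (1+t*t))).
auto_derive. lra.
Qed.

Lemma gU_derive x : is_derive gU x (- 2 * exp (-(x*x)) * gI x).
Proof.
unfold gU.
assert (H := is_derive_RInt_param gfu 0 1 x).
assert (E : forall u t, Derive (fun z => gfu z t) u = -2 * u * exp (-(u*u)*(1+t*t))).
{ intros. apply is_derive_unique. apply gfu_derive. }
assert (E2 : RInt (fun t : R => Derive (fun u : R => gfu u t) x) 0 1 = - 2 * exp (-(x*x)) * gI x).
{ rewrite (RInt_ext _ (fun t => scal (-2 * exp (-(x*x))) (scal x (exp (-((x*t+0)*(x*t+0))))))).
  2:{ intros t _. rewrite E. unfold scal; simpl; unfold mult; simpl.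
      replace (-((x*t+0)*(x*t+0))) with (-(x*x)*(t*t)) by ring.
      replace (-(x*x)*(1+t*t)) with (-(x*x) + -(x*x)*(t*t)) by ring.
      rewrite exp_plus. ring. }
  apply is_RInt_unique.
  assert (I1 : is_RInt (fun t => scal x (exp (-((x*t+0)*(x*t+0))))) 0 1 (gI x)).
  { apply (is_RInt_comp_lin (fun t => exp (-(t*t))) x 0 0 1).
    assert (e0 : x*0+0 = 0) by (simpl; ring). assert (e1 : x*1+0 = x) by (simpl; ring).
    rewrite e0, e1. unfold gI. apply (RInt_correct (V := R_CompleteNormedModule)).
    apply ex_RInt_continuous. intros; apply gauss_cont. }
  assert (I2 := is_RInt_scal _ 0 1 (-2 * exp (-(x*x))) _ I1).
  replace (-2 * exp (- (x * x)) * gI x) with (scal (-2 * exp (-(x*x))) (gI x)).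
  exact I2.
  unfold scal; simpl; unfold mult; simpl. ring. }
rewrite <- E2. apply H.
- apply filter_forall. intros y t _. eexists. apply gfu_derive.
- intros t _. apply continuity_2d_pt_ext with (f := fun u v => -2 * u * exp (-(u*u)*(1+v*v))).
  { intros; rewrite E; auto. }
  apply continuity_2d_pt_mult.
  + apply continuity_2d_pt_mult. apply continuity_2d_pt_const. apply continuity_2d_pt_id1.
  + apply (continuity_1d_2d_pt_comp exp (fun u v => -(u*u)*(1+v*v))).
    * apply derivable_continuous_pt. apply derivable_pt_exp.
    * apply continuity_2d_pt_mult. apply continuity_2d_pt_opp.
      apply continuity_2d_pt_mult; apply continuity_2d_pt_id1.
      apply continuity_2d_pt_plus. apply continuity_2d_pt_const.
      apply continuity_2d_pt_mult; apply continuity_2d_pt_id2.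
- apply filter_forall. intros y. apply (ex_RInt_continuous (V:=R_CompleteNormedModule)). intros; apply gfu_cont.
Qed.

Lemma gU0 : gU 0 = PI / 4.
Proof.
unfold gU. rewrite <- atan_1.
replace (atan 1) with (atan 1 - atan 0) by (rewrite atan_0; ring).
apply is_RInt_unique.
apply (is_RInt_ext (fun t => / (1 + t^2))).
{ intros t _. unfold gfu. replace (-(0*0)*(1+t*t)) with 0 by ring. rewrite exp_0.
  field_simplify; auto. nra. nra. }
apply (is_RInt_derive atan (fun t => / (1 + t^2))).
- intros t _. apply is_derive_Reals. apply derivable_pt_lim_atan.
- intros t _. apply (ex_derive_continuous (fun t => / (1 + t^2))). auto_derive. nra.
Qed.

Lemma gconst x : gI x * gI x + gU x = PI / 4.
Proof.
rewrite <- gU0.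
assert (H : forall y, is_derive (fun y => gI y * gI y + gU y) y 0).
{ intros y. replace 0 with (exp (-(y*y)) * gI y + gI y * exp (-(y*y)) + (-2 * exp (-(y*y)) * gI y)) by ring.
  apply (is_derive_plus (fun y => gI y * gI y) gU).
  apply (is_derive_mult gI gI). apply gI_derive. apply gI_derive.
  intros; simpl; unfold mult; simpl; ring.
  apply gU_derive. }
destruct (MVT_gen (fun y => gI y * gI y + gU y) 0 x (fun _ => 0)) as [c [_ Hc]].
- intros; apply H.
- intros y _. apply continuity_pt_filterlim. apply (ex_derive_continuous (fun y => gI y * gI y + gU y)).
  eexists; apply H.
- assert (gI 0 = 0). { unfold gI. apply (RInt_point (V:=R_CompleteNormedModule)). }
  simpl in Hc. rewrite H0 in Hc. lra.
Qed.

Lemma gU_bounds x : 0 <= gU x <= exp (-(x*x)).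
Proof.
assert (Hex : ex_RInt (fun t => gfu x t) 0 1).
{ apply (ex_RInt_continuous (V:=R_CompleteNormedModule)). intros; apply gfu_cont. }
unfold gU. split.
- apply Rle_trans with (RInt (fun _ => 0) 0 1).
  { rewrite RInt_const. unfold scal; simpl; unfold mult; simpl; lra. }
  apply RInt_le; auto. lra. apply ex_RInt_const.
  intros t _. unfold gfu. apply Rmult_le_pos. apply Rlt_le, exp_pos.
  apply Rlt_le, Rinv_0_lt_compat. nra.
- replace (exp (-(x*x))) with (RInt (fun _ => exp (-(x*x))) 0 1).
  2:{ rewrite RInt_const. unfold scal; simpl; unfold mult; simpl; ring. }
  apply RInt_le; auto. lra. apply ex_RInt_const.
  intros t _. unfold gfu.
  assert (0 < 1 + t*t) by nra.
  apply (Rmult_le_reg_r (1+t*t)); auto. unfold Rdiv. rewrite Rmult_assoc, Rinv_l by lra.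
  rewrite Rmult_1_r.
  replace (-(x*x)*(1+t*t)) with (-(x*x) + -(x*x*t*t)) by ring. rewrite exp_plus.
  assert (exp (-(x*x*t*t)) <= 1). { rewrite <- exp_0. apply exp_le. nra. }
  assert (0 < exp (-(x*x))) by apply exp_pos.
  nra.
Qed.

Lemma gI_nonneg x : 0 <= x -> 0 <= gI x.
Proof.
intros Hx. unfold gI. apply Rle_trans with (RInt (fun _ => 0) 0 x).
{ rewrite RInt_const. unfold scal; simpl; unfold mult; simpl; lra. }
apply RInt_le; auto. apply ex_RInt_const.
apply (ex_RInt_continuous (V:=R_CompleteNormedModule)). intros; apply gauss_cont.
intros; apply Rlt_le, exp_pos.
Qed.

Lemma gI_le x : 0 <= x -> gI x <= sqrt PI / 2.
Proof.
intros Hx. assert (H := gconst x). assert (H2 := gU_bounds x). assert (H3 := gI_nonneg x Hx).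
assert (HP := PI2_3_2).
assert (Hs : sqrt PI / 2 = sqrt (PI/4)).
{ replace (PI/4) with (PI/(2*2)) by field. rewrite sqrt_div_alt by lra. rewrite sqrt_square; lra. }
rewrite Hs. rewrite <- (sqrt_square (gI x)) by auto. apply sqrt_le_1_alt. lra.
Qed.

Lemma gI_ge x : 0 <= x -> sqrt PI / 2 - gI x <= 2 * exp (-(x*x)).
Proof.
intros Hx. assert (H := gconst x). assert (H2 := gU_bounds x). assert (H3 := gI_nonneg x Hx).
assert (HP := PI2_3_2).
assert (Hs : sqrt PI / 2 = sqrt (PI/4)).
{ replace (PI/4) with (PI/(2*2)) by field. rewrite sqrt_div_alt by lra. rewrite sqrt_square; lra. }
assert (Hs1 : 1/2 <= sqrt PI / 2).
{ rewrite Hs. rewrite <- (sqrt_square (1/2)) by lra. apply sqrt_le_1_alt. lra. }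
assert (Hsq : (sqrt PI / 2) * (sqrt PI / 2) = PI / 4).
{ rewrite Hs. apply sqrt_sqrt. lra. }
nra.
Qed.

Lemma RInt_shift (f : R -> R) v a b : ex_RInt f (a+v) (b+v) ->
  RInt (fun t => f (t + v)) a b = RInt f (a+v) (b+v).
Proof.
intros H. apply is_RInt_unique.
assert (I1 := is_RInt_comp_lin f 1 v a b (RInt f (a+v) (b+v))).
replace (1*a+v) with (a+v) in I1 by ring. replace (1*b+v) with (b+v) in I1 by ring.
specialize (I1 (RInt_correct _ _ _ H)).
apply (is_RInt_ext _ _ _ _ _ (fun x _ => ltac:(unfold scal; simpl; unfold mult; simpl;
   replace (1*x+v) with (x+v) by ring; ring) : scal 1 (f (1*x+v)) = f (x+v))) in I1.
exact I1.
Qed.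

Lemma RInt_refl (f : R -> R) v a b : ex_RInt f (v-b) (v-a) ->
  RInt (fun t => f (v - t)) a b = RInt f (v-b) (v-a).
Proof.
intros H. apply is_RInt_unique.
assert (I0 := is_RInt_swap _ _ _ _ (RInt_correct _ _ _ H)).
assert (I1 := is_RInt_comp_lin f (-1) v a b (opp (RInt f (v-b) (v-a)))).
replace (-1*a+v) with (v-a) in I1 by ring. replace (-1*b+v) with (v-b) in I1 by ring.
specialize (I1 I0).
assert (I2 := is_RInt_scal _ _ _ (-1) _ I1).
apply (is_RInt_ext _ _ _ _ _ (fun x _ => ltac:(unfold scal; simpl; unfold mult; simpl;
   replace (-1*x+v) with (v-x) by ring; ring) : scal (-1) (scal (-1) (f (-1*x+v))) = f (v-x))) in I2.
replace (RInt f (v-b) (v-a)) with (scal (-1) (opp (RInt f (v - b) (v - a)))).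
exact I2.
unfold scal, opp; simpl; unfold mult; simpl. ring.
Qed.

Lemma gscale c Y : 0 < c -> RInt (fun t => exp (-(c*(t*t)))) 0 Y = gI (sqrt c * Y) / sqrt c.
Proof.
intros Hc. assert (Hs : 0 < sqrt c) by (apply sqrt_lt_R0; auto).
apply is_RInt_unique.
assert (I1 := is_RInt_comp_lin (fun t => exp (-(t*t))) (sqrt c) 0 0 Y (gI (sqrt c * Y))).
replace (sqrt c * 0 + 0) with 0 in I1 by ring. replace (sqrt c * Y + 0) with (sqrt c * Y) in I1 by ring.
assert (I0 : is_RInt (fun t => exp (-(t*t))) 0 (sqrt c * Y) (gI (sqrt c * Y))).
{ unfold gI. apply (RInt_correct (V := R_CompleteNormedModule)). apply ex_RInt_continuous. intros; apply gauss_cont. }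
specialize (I1 I0).
assert (I2 := is_RInt_scal _ _ _ (/ sqrt c) _ I1).
apply (is_RInt_ext _ _ _ _ _ (fun x _ => ltac:(unfold scal; simpl; unfold mult; simpl;
   replace ((sqrt c * x + 0) * (sqrt c * x + 0)) with ((sqrt c * sqrt c) * (x * x)) by ring;
   rewrite sqrt_sqrt by lra; field; lra) : scal (/ sqrt c) (scal (sqrt c) (exp (-((sqrt c * x + 0)*(sqrt c * x + 0))))) = exp (-(c*(x*x))))) in I2.
replace (gI (sqrt c * Y) / sqrt c) with (scal (/ sqrt c) (gI (sqrt c * Y))).
exact I2.
unfold scal; simpl; unfold mult; simpl. field. lra.
Qed.



Lemma improper (f : R -> R) (a L E b0 : R) :
  (forall x, a <= x -> continuous f x) ->
  (forall x, a <= x -> 0 <= f x) ->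
  a <= b0 ->
  (forall b, b0 <= b -> Rabs (RInt f a b - L) <= E) ->
  ex_RInt_gen f (at_point a) (Rbar_locally p_infty) /\
  Rabs (RInt_gen f (at_point a) (Rbar_locally p_infty) - L) <= E.
Proof.
intros Hc Hp Hab0 Hb.
assert (Hex : forall x y, a <= x -> x <= y -> ex_RInt f x y).
{ intros x y Hx Hy. apply (ex_RInt_continuous (V:=R_CompleteNormedModule)).
  intros z Hz. apply Hc. rewrite Rmin_left in Hz by lra. lra. }
assert (Hmono : forall x y, a <= x -> x <= y -> RInt f a x <= RInt f a y).
{ intros x y Hx Hy. rewrite <- (RInt_Chasles f a x y).
  2:{ apply (Hex a x); lra. } 2:{ apply (Hex x y); lra. }
  assert (0 <= RInt f x y). { apply RInt_ge_0; auto. intros; apply Hp; lra. }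
  simpl. unfold plus; simpl. lra. }
set (S := fun v => exists b, a <= b /\ v = RInt f a b).
assert (Hub : forall b, a <= b -> RInt f a b <= L + E).
{ intros b Hb1. apply Rle_trans with (RInt f a (Rmax b b0)).
  apply Hmono; auto. apply Rmax_l.
  assert (H := Hb (Rmax b b0) (Rmax_r _ _)). apply abs_le in H. lra. }
destruct (completeness S) as [l [Hl1 Hl2]].
{ exists (L+E). intros v [b [Hb1 ->]]. apply Hub; auto. }
{ exists (RInt f a a). exists a. split; auto. lra. }
assert (Hle : forall b, a <= b -> RInt f a b <= l).
{ intros b Hb1. apply Hl1. exists b; auto. }
assert (HlL : Rabs (l - L) <= E).
{ apply abs_le_intro. split.
  - assert (H := Hb b0 (Rle_refl _)). apply abs_le in H. assert (H2 := Hle b0 Hab0). lra.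
  - assert (l <= L + E). { apply Hl2. intros v [b [Hb1 ->]]. apply Hub; auto. } lra. }
assert (Hlim : is_RInt_gen f (at_point a) (Rbar_locally p_infty) l).
{ intros P [eps HP].
  assert (Hx : exists b1, a <= b1 /\ l - eps < RInt f a b1).
  { destruct (classic (exists b1, a <= b1 /\ l - eps < RInt f a b1)) as [H|H]; auto.
    exfalso. assert (l <= l - eps).
    { apply Hl2. intros v [b [Hb1 ->]]. apply Rnot_lt_le. intro. apply H. exists b. auto. }
    destruct eps; simpl in *; lra. }
  destruct Hx as [b1 [Hb1 Hb1']].
  apply (Filter_prod _ _ _ (fun x => x = a) (fun y => b1 < y)).
  - reflexivity.
  - exists b1. auto.
  - intros x y -> Hy. exists (RInt f a y). split.
    + apply (RInt_correct (V:=R_CompleteNormedModule)). apply Hex; lra.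
    + apply HP. assert (H1 := Hmono b1 y Hb1 (Rlt_le _ _ Hy)). assert (H2 := Hle y ltac:(lra)).
      change (Rabs (RInt f a y - l) < eps). apply Rabs_def1; lra. }
split.
- exists l; auto.
- rewrite (is_RInt_gen_unique _ _ Hlim). auto.
Qed.


Lemma S_bound (h0 hp hm wp wm A1 A2 Hh D B n a t : R) :
  0 <= t -> 0 < n -> 0 < a -> 0 <= A1 -> 0 <= A2 -> 0 <= D -> 0 <= B ->
  Rabs (hp - h0) <= A1 * t -> Rabs (hm - h0) <= A1 * t ->
  Rabs (hp + hm - 2*h0) <= A2 * t^2 ->
  Rabs hp <= Hh -> Rabs hm <= Hh ->
  Rabs wp <= D * t^3 -> Rabs wm <= D * t^3 -> Rabs (wp + wm) <= B * t^4 ->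
  D * t^3 <= a * t^2 / 4 ->
  Rabs (hp * exp (n*wp) + hm * exp (n*wm) - 2*h0) <=
    (2 * Hh * D^2 + A2 + Rabs h0 * B + 2 * A1 * D) * (t^2 + n * t^4 + n^2 * t^6) * exp (n*a*t^2/4).
Proof.
intros Ht Hn Ha PA1 PA2 PD PB H1 H2 H3 H4 H5 H6 H7 H8 H9.
set (E := exp (n*a*t^2/4)).
assert (HE : 1 <= E). { unfold E. rewrite <- exp_0. apply exp_le. assert (0 <= n*a*t^2) by (apply Rmult_le_pos; [nra| apply pow_le; auto]). lra. }
assert (HD : 0 <= D * t^3) by (apply Rle_trans with (Rabs wp); [apply Rabs_pos | assumption]).
assert (HA1 : 0 <= A1 * t) by (apply Rle_trans with (Rabs (hp-h0)); [apply Rabs_pos | assumption]).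
assert (HA2 : 0 <= A2 * t^2) by (apply Rle_trans with (Rabs (hp+hm-2*h0)); [apply Rabs_pos | assumption]).
assert (HB : 0 <= B * t^4) by (apply Rle_trans with (Rabs (wp+wm)); [apply Rabs_pos | assumption]).
assert (HHh : 0 <= Hh) by (apply Rle_trans with (Rabs hp); [apply Rabs_pos | assumption]).
assert (Hexp : forall w, Rabs w <= D * t^3 -> Rabs (exp (n*w) - 1 - n*w) <= n^2 * (D^2 * t^6) * E).
{ intros w Hw. apply Rle_trans with ((n*w)^2 * exp (Rabs (n*w))). apply exp2_bound.
  assert (Hnw : Rabs (n*w) <= n * (D*t^3)).
  { rewrite Rabs_mult, (Rabs_right n) by lra. apply Rmult_le_compat_l; lra. }
  apply Rmult_le_compat.
  - apply pow2_ge_0.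
  - left; apply exp_pos.
  - replace ((n*w)^2) with (Rabs (n*w) ^2) by apply pow2_abs.
    replace (n^2 * (D^2*t^6)) with ((n*(D*t^3))^2) by ring.
    apply pow_incr. split. apply Rabs_pos. auto.
  - unfold E. apply exp_le. apply Rle_trans with (n*(D*t^3)); auto.
    replace (n*a*t^2/4) with (n*(a*t^2/4)) by field. apply Rmult_le_compat_l; lra. }
assert (T1 := Hexp wp H6). assert (T2 := Hexp wm H7).
replace (hp * exp (n*wp) + hm * exp (n*wm) - 2*h0) with
  (hp * (exp (n*wp) - 1 - n*wp) + hm * (exp (n*wm) - 1 - n*wm) + (hp + hm - 2*h0)
   + n * (h0 * (wp+wm) + (hp-h0)*wp + (hm-h0)*wm)) by ring.
assert (R1 : Rabs (hp * (exp (n*wp) - 1 - n*wp)) <= Hh * (n^2 * (D^2 * t^6) * E)).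
{ rewrite Rabs_mult. apply Rmult_le_compat; auto; apply Rabs_pos. }
assert (R2 : Rabs (hm * (exp (n*wm) - 1 - n*wm)) <= Hh * (n^2 * (D^2 * t^6) * E)).
{ rewrite Rabs_mult. apply Rmult_le_compat; auto; apply Rabs_pos. }
assert (R4 : Rabs (n * (h0 * (wp+wm) + (hp-h0)*wp + (hm-h0)*wm)) <=
             n * (Rabs h0 * (B * t^4) + (A1*t)*(D*t^3) + (A1*t)*(D*t^3))).
{ rewrite Rabs_mult, (Rabs_right n) by lra. apply Rmult_le_compat_l. lra.
  eapply Rle_trans. apply Rabs_triang. eapply Rle_trans. apply Rplus_le_compat_r. apply Rabs_triang.
  rewrite !Rabs_mult. apply Rplus_le_compat. apply Rplus_le_compat.
  apply Rmult_le_compat_l; auto. apply Rabs_pos.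
  apply Rmult_le_compat; auto; apply Rabs_pos.
  apply Rmult_le_compat; auto; apply Rabs_pos. }
eapply Rle_trans. apply Rabs_triang.
eapply Rle_trans. apply Rplus_le_compat_r. apply Rabs_triang.
eapply Rle_trans. apply Rplus_le_compat_r. apply Rplus_le_compat_r. apply Rabs_triang.
set (K1 := 2 * Hh * D^2 + A2 + Rabs h0 * B + 2 * A1 * D).
assert (Ht2 : 0 <= t^2) by (apply pow_le; auto).
assert (Ht4 : 0 <= t^4) by (apply pow_le; auto).
assert (Ht6 : 0 <= t^6) by (apply pow_le; auto).
assert (Hh0 := Rabs_pos h0).
assert (E0 : 0 <= E) by lra.
replace (K1 * (t^2 + n*t^4 + n^2*t^6) * E) with
  (2*(Hh * (n^2 * (D^2 * t^6) * E)) + A2 * t^2 * E + n * (Rabs h0 * (B*t^4) + (A1*t)*(D*t^3) + (A1*t)*(D*t^3)) * E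
   + (2*Hh*D^2*(t^2+n*t^4) + A2*(n*t^4+n^2*t^6) + (Rabs h0*B + 2*A1*D)*(t^2 + n^2*t^6))*E) by (unfold K1; ring).
assert (Z1 : 0 <= (2*Hh*D^2*(t^2+n*t^4) + A2*(n*t^4+n^2*t^6) + (Rabs h0*B + 2*A1*D)*(t^2 + n^2*t^6))*E).
{ apply Rmult_le_pos; auto. assert (0 <= D^2) by apply pow2_ge_0.
  assert (0 <= n*t^4) by (apply Rmult_le_pos; lra). assert (0 <= n^2*t^6) by (apply Rmult_le_pos; auto; apply pow_le; lra).
  assert (0 <= Hh*D^2) by (apply Rmult_le_pos; auto).
  assert (0 <= Rabs h0*B) by (apply Rmult_le_pos; auto). assert (0 <= A1*D) by (apply Rmult_le_pos; auto).
  assert (0 <= 2*Hh*D^2*(t^2+n*t^4)) by (apply Rmult_le_pos; lra).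
  assert (0 <= A2*(n*t^4+n^2*t^6)) by (apply Rmult_le_pos; lra).
  assert (0 <= (Rabs h0*B + 2*A1*D)*(t^2 + n^2*t^6)) by (apply Rmult_le_pos; lra). lra. }
assert (Z2 : A2 * t^2 <= A2 * t^2 * E) by nra.
assert (Z3 : 0 <= n * (Rabs h0 * (B*t^4) + (A1*t)*(D*t^3) + (A1*t)*(D*t^3))).
{ apply Rmult_le_pos. lra. assert (0 <= Rabs h0 * (B*t^4)) by (apply Rmult_le_pos; auto).
  assert (0 <= (A1*t)*(D*t^3)) by (apply Rmult_le_pos; auto). lra. }
assert (Z4 : n * (Rabs h0 * (B*t^4) + (A1*t)*(D*t^3) + (A1*t)*(D*t^3)) <= n * (Rabs h0 * (B*t^4) + (A1*t)*(D*t^3) + (A1*t)*(D*t^3)) * E) by nra.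
lra.
Qed.


Definition gg q C r x := ln (1 + x*x) - ln (1 + r*r) - ((x-q)*(x-q) - (r-q)*(r-q))/C.
Definition aa C r := 2/C - 2*(1 - r*r)/((1+r*r)*(1+r*r)).
Definition kk C r := 1/C - 1/(1+r*r).
Definition ww q C r t := gg q C r (r+t) + aa C r * t^2 / 2.

Lemma ln_le_sub1 y : 0 < y -> ln y <= y - 1.
Proof. intros Hy. assert (H := exp_ineq1_le (ln y)). rewrite exp_ln in H by auto. lra. Qed.

Lemma gg_global q C r x : 0 < r -> 0 < C -> q = r - C*r/(1+r*r) ->
  gg q C r x <= - kk C r * ((x-r)*(x-r)).
Proof.
intros Hr HC Hq. unfold gg, kk.
assert (Hm : 0 < 1 + r*r) by nra. assert (Hx : 0 < 1 + x*x) by nra.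
assert (H := ln_le_sub1 ((1+x*x)/(1+r*r)) ltac:(apply Rdiv_lt_0_compat; auto)).
rewrite ln_div in H by auto.
assert (E : (1 + x*x)/(1+r*r) - 1 - ((x-q)*(x-q) - (r-q)*(r-q))/C = -(1/C - 1/(1+r*r))*((x-r)*(x-r))).
{ subst q. field. split; lra. }
lra.
Qed.

Definition Lr s := ln (1+s) - s + s^2/2 - s^3/3.
Definition ss r t := (2*r*t + t*t)/(1+r*r).
Definition QQ r t := (2*r+t)^3/(3*(1+r*r)^3) - (4*r+t)/(2*(1+r*r)^2).

Lemma ww_eq q C r t : 0 < r -> 0 < C -> q = r - C*r/(1+r*r) ->
  ww q C r t = Lr (ss r t) + t^3 * QQ r t.
Proof.
intros Hr HC Hq. unfold ww, gg, Lr, ss, QQ, aa.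
assert (Hm : 0 < 1 + r*r) by nra.
assert (Hx : 0 < 1 + (r+t)*(r+t)) by (pose proof (Rle_0_sqr (r+t)); unfold Rsqr in *; lra).
replace (1 + (2*r*t + t*t)/(1+r*r)) with ((1 + (r+t)*(r+t))/(1+r*r)) by (field; lra).
rewrite ln_div by auto.
subst q. field. split; lra.
Qed.

Lemma pow_abs_le x X n : Rabs x <= X -> Rabs (x^n) <= X^n.
Proof. intros H. rewrite <- RPow_abs. apply pow_incr. split; auto. apply Rabs_pos. Qed.

Lemma QQ_bound r t : 0 < r -> -1 <= t <= 1 ->
  Rabs (QQ r t) <= (2*r+1)^3/(3*(1+r*r)^3) + (4*r+1)/(2*(1+r*r)^2).
Proof.
intros Hr Ht. unfold QQ.
assert (Hm : 0 < 1 + r*r) by nra.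
assert (P3 : 0 < 3*(1+r*r)^3) by (apply Rmult_lt_0_compat; [lra| apply pow_lt; lra]).
assert (P2 : 0 < 2*(1+r*r)^2) by (apply Rmult_lt_0_compat; [lra| apply pow_lt; lra]).
eapply Rle_trans. apply Rabs_triang. rewrite Rabs_Ropp. unfold Rdiv. rewrite !Rabs_mult.
rewrite (Rabs_right (/ (3*(1+r*r)^3))) by (left; apply Rinv_0_lt_compat; auto).
rewrite (Rabs_right (/ (2*(1+r*r)^2))) by (left; apply Rinv_0_lt_compat; auto).
apply Rplus_le_compat; apply Rmult_le_compat_r; try (left; apply Rinv_0_lt_compat; auto).
- apply pow_abs_le. apply abs_le_intro. lra.
- apply abs_le_intro. lra.
Qed.

Lemma Lr_bound s X : Rabs s <= X -> X <= 1/2 -> Rabs (Lr s) <= 2 * X^4.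
Proof.
intros H1 H2. unfold Lr. eapply Rle_trans. apply ln3_bound; lra.
apply Rmult_le_compat_l. lra.
replace (s^4) with (Rabs (s^4)). apply pow_abs_le; auto.
apply Rabs_right. replace (s^4) with ((s^2)^2) by ring. apply Rle_ge, pow2_ge_0.
Qed.

Lemma ww_bounds q C r : 0 < r -> 0 < C -> q = r - C*r/(1+r*r) ->
  exists d1 D B, 0 < d1 /\ 0 <= D /\ 0 <= B /\ forall t, 0 <= t <= d1 ->
    Rabs (ww q C r t) <= D * t^3 /\ Rabs (ww q C r (-t)) <= D * t^3 /\
    Rabs (ww q C r t + ww q C r (-t)) <= B * t^4.
Proof.
intros Hr HC Hq.
set (m := 1 + r*r). assert (Hm : 0 < m) by (unfold m; nra).
set (c1 := (2*r+1)/m). assert (Hc1 : 0 < c1) by (unfold c1; apply Rdiv_lt_0_compat; lra).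
set (Q0 := (2*r+1)^3/(3*m^3) + (4*r+1)/(2*m^2)).
set (V0 := (24*r*r+2)/(3*m^3) + 1/(m*m)).
assert (HQ0 : 0 <= Q0).
{ unfold Q0. apply Rplus_le_le_0_compat; apply Rmult_le_pos; try (left; apply Rinv_0_lt_compat).
  apply pow_le; lra. apply Rmult_lt_0_compat; [lra| apply pow_lt; lra]. lra.
  apply Rmult_lt_0_compat; [lra| apply pow_lt; lra]. }
assert (HV0 : 0 <= V0).
{ unfold V0. apply Rplus_le_le_0_compat; apply Rmult_le_pos; try (left; apply Rinv_0_lt_compat).
  nra. apply Rmult_lt_0_compat; [lra| apply pow_lt; lra]. lra. nra. }
exists (Rmin 1 (m/(2*(2*r+1)))), (2*c1^4 + Q0), (4*c1^4 + V0).
assert (Hc14 : 0 <= c1^4) by (apply pow_le; lra).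
split. apply Rmin_pos. lra. apply Rdiv_lt_0_compat; lra.
split. lra. split. lra.
intros t [Ht0 Ht1].
assert (Ht1' : t <= 1) by (apply Rle_trans with (1 := Ht1); apply Rmin_l).
assert (Ht2' : t <= m/(2*(2*r+1))) by (apply Rle_trans with (1 := Ht1); apply Rmin_r).
assert (Hct : c1 * t <= 1/2).
{ unfold c1. apply Rle_trans with ((2*r+1)/m * (m/(2*(2*r+1)))).
  apply Rmult_le_compat_l; auto. left; auto. right. field. lra. }
assert (Hsp : Rabs (ss r t) <= c1 * t).
{ assert (E1 : c1*t - ss r t = t*(1-t)/m) by (unfold c1, ss, m in *; field; lra).
  assert (E2 : c1*t + ss r t = t*(4*r+1+t)/m) by (unfold c1, ss, m in *; field; lra).
  assert (0 <= t*(1-t)/m) by (apply Rdiv_le_0_compat; nra).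
  assert (0 <= t*(4*r+1+t)/m) by (apply Rdiv_le_0_compat; nra).
  apply abs_le_intro. lra. }
assert (Hsm : Rabs (ss r (-t)) <= c1 * t).
{ assert (E1 : c1*t - ss r (-t) = t*(4*r+1-t)/m) by (unfold c1, ss, m in *; field; lra).
  assert (E2 : c1*t + ss r (-t) = t*(1+t)/m) by (unfold c1, ss, m in *; field; lra).
  assert (0 <= t*(4*r+1-t)/m) by (apply Rdiv_le_0_compat; nra).
  assert (0 <= t*(1+t)/m) by (apply Rdiv_le_0_compat; nra).
  apply abs_le_intro. lra. }
assert (Lp := Lr_bound _ _ Hsp Hct). assert (Lm := Lr_bound _ _ Hsm Hct).
assert (Qp := QQ_bound r t Hr ltac:(lra)). assert (Qm := QQ_bound r (-t) Hr ltac:(lra)).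
fold m in Qp, Qm. fold Q0 in Qp, Qm.
assert (Ht3 : 0 <= t^3) by (apply pow_le; lra).
assert (Ht4 : t^4 <= t^3) by (replace (t^4) with (t^3 * t) by ring; nra).
assert (E4 : (c1*t)^4 = c1^4 * t^4) by ring.
rewrite E4 in Lp, Lm.
rewrite !(ww_eq q C r) by auto.
split; [|split].
- eapply Rle_trans. apply Rabs_triang. rewrite Rabs_mult, (Rabs_right (t^3)) by lra.
  assert (t^3 * Rabs (QQ r t) <= t^3 * Q0) by (apply Rmult_le_compat_l; auto).
  assert (c1^4 * t^4 <= c1^4 * t^3) by (apply Rmult_le_compat_l; auto). nra.
- eapply Rle_trans. apply Rabs_triang. rewrite Rabs_mult.
  replace (Rabs ((-t)^3)) with (t^3) by (replace ((-t)^3) with (-(t^3)) by ring; rewrite Rabs_Ropp, Rabs_right; lra).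
  assert (t^3 * Rabs (QQ r (-t)) <= t^3 * Q0) by (apply Rmult_le_compat_l; auto).
  assert (c1^4 * t^4 <= c1^4 * t^3) by (apply Rmult_le_compat_l; auto). nra.
- replace (Lr (ss r t) + t^3 * QQ r t + (Lr (ss r (-t)) + (-t)^3 * QQ r (-t))) with
    (Lr (ss r t) + Lr (ss r (-t)) + t^4 * ((24*r*r + 2*t*t)/(3*m^3) - 1/(m*m))).
  2:{ unfold QQ. fold m. field. lra. }
  eapply Rle_trans. apply Rabs_triang. eapply Rle_trans. apply Rplus_le_compat_r. apply Rabs_triang.
  rewrite Rabs_mult, (Rabs_right (t^4)) by (apply Rle_ge, pow_le; lra).
  assert (Rabs ((24*r*r + 2*t*t)/(3*m^3) - 1/(m*m)) <= V0).
  { unfold V0. eapply Rle_trans. apply Rabs_triang. rewrite Rabs_Ropp.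
    assert (P3 : 0 < 3*m^3) by (apply Rmult_lt_0_compat; [lra| apply pow_lt; lra]).
    apply Rplus_le_compat.
    - rewrite Rabs_right. unfold Rdiv. apply Rmult_le_compat_r. left; apply Rinv_0_lt_compat; auto. nra.
      apply Rle_ge, Rdiv_le_0_compat; nra.
    - right. apply Rabs_right. apply Rle_ge, Rdiv_le_0_compat; nra. }
  assert (0 <= t^4) by (apply pow_le; lra).
  assert (t^4 * Rabs ((24*r*r + 2*t*t)/(3*m^3) - 1/(m*m)) <= t^4 * V0) by (apply Rmult_le_compat_l; auto).
  nra.
Qed.


Definition hh al x := exp (al * ln x).

Lemma h_bounds al r : 0 < r ->
  exists d2 A1 A2 Hh, 0 < d2 /\ 0 <= A1 /\ 0 <= A2 /\ forall t, 0 <= t <= d2 ->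
    Rabs (hh al (r+t) - hh al r) <= A1 * t /\ Rabs (hh al (r-t) - hh al r) <= A1 * t /\
    Rabs (hh al (r+t) + hh al (r-t) - 2 * hh al r) <= A2 * t^2 /\
    Rabs (hh al (r+t)) <= Hh /\ Rabs (hh al (r-t)) <= Hh.
Proof.
intros Hr. set (h0 := hh al r). assert (Hh0 : 0 < h0) by apply exp_pos.
set (ea := exp (Rabs al)). assert (Hea : 0 < ea) by apply exp_pos.
exists (r/2), (2*h0*Rabs al*ea/r), (h0*(8*al^2*ea + 2*Rabs al)/(r*r)), (h0*ea).
assert (Hal := Rabs_pos al).
split. lra. split. apply Rdiv_le_0_compat; [|lra]. apply Rmult_le_pos; [|lra]. nra.
split. apply Rdiv_le_0_compat; [|nra]. apply Rmult_le_pos; [lra|]. assert (0 <= al^2) by apply pow2_ge_0. nra.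
intros t [Ht0 Ht1].
set (u := t/r). assert (Hu : 0 <= u <= 1/2) by (unfold u; split; [apply Rdiv_le_0_compat; lra| apply (Rmult_le_reg_r r); auto; unfold Rdiv; rewrite Rmult_assoc, Rinv_l; lra]).
assert (Ep : hh al (r+t) = h0 * exp (al * ln (1+u))).
{ unfold h0, hh. rewrite <- exp_plus. f_equal. rewrite <- Rmult_plus_distr_l. f_equal.
  rewrite <- ln_mult by lra. f_equal. unfold u. field. lra. }
assert (Em : hh al (r-t) = h0 * exp (al * ln (1+ -u))).
{ unfold h0, hh. rewrite <- exp_plus. f_equal. rewrite <- Rmult_plus_distr_l. f_equal.
  rewrite <- ln_mult by lra. f_equal. unfold u. field. lra. }
rewrite Ep, Em. set (x := al * ln (1+u)). set (y := al * ln (1 + -u)).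
assert (Hx : Rabs x <= 2 * Rabs al * u).
{ unfold x. rewrite Rabs_mult. assert (H := ln1_bound u ltac:(apply abs_le_intro; lra)).
  rewrite (Rabs_right u) in H by lra. nra. }
assert (Hy : Rabs y <= 2 * Rabs al * u).
{ unfold y. rewrite Rabs_mult. assert (H := ln1_bound (-u) ltac:(apply abs_le_intro; lra)).
  rewrite Rabs_Ropp, (Rabs_right u) in H by lra. nra. }
assert (Hx1 : exp (Rabs x) <= ea) by (apply exp_le; nra).
assert (Hy1 : exp (Rabs y) <= ea) by (apply exp_le; nra).
assert (Hxy : Rabs (x + y) <= Rabs al * (2 * u^2)).
{ unfold x, y. rewrite <- Rmult_plus_distr_l, Rabs_mult. apply Rmult_le_compat_l; auto.
  rewrite <- ln_mult by lra. replace ((1+u)*(1+ -u)) with (1 + -(u^2)) by ring.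
  eapply Rle_trans. apply ln1_bound. apply abs_le_intro. nra. rewrite Rabs_Ropp, Rabs_right. lra.
  apply Rle_ge, pow2_ge_0. }
assert (Ex1 := exp1_bound x). assert (Ey1 := exp1_bound y).
assert (Ex2 := exp2_bound x). assert (Ey2 := exp2_bound y).
assert (Hex : 0 < exp x) by apply exp_pos. assert (Hey : 0 < exp y) by apply exp_pos.
assert (Rt : t = u * r) by (unfold u; field; lra).
split; [|split; [|split; [|split]]].
- replace (h0 * exp x - h0) with (h0 * (exp x - 1)) by ring.
  rewrite Rabs_mult, (Rabs_right h0) by lra. rewrite Rt.
  replace (2*h0*Rabs al*ea/r*(u*r)) with (h0 * ((2*Rabs al*u) * ea)) by (field; lra).
  apply Rmult_le_compat_l. lra. eapply Rle_trans. apply Ex1.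
  apply Rmult_le_compat; auto. apply Rabs_pos. left; apply exp_pos.
- replace (h0 * exp y - h0) with (h0 * (exp y - 1)) by ring.
  rewrite Rabs_mult, (Rabs_right h0) by lra. rewrite Rt.
  replace (2*h0*Rabs al*ea/r*(u*r)) with (h0 * ((2*Rabs al*u) * ea)) by (field; lra).
  apply Rmult_le_compat_l. lra. eapply Rle_trans. apply Ey1.
  apply Rmult_le_compat; auto. apply Rabs_pos. left; apply exp_pos.
- replace (h0 * exp x + h0 * exp y - 2*h0) with (h0 * ((exp x - 1 - x) + (exp y - 1 - y) + (x+y))) by ring.
  rewrite Rabs_mult, (Rabs_right h0) by lra. rewrite Rt.
  replace (h0*(8*al^2*ea + 2*Rabs al)/(r*r)*(u*r)^2) with (h0 * (4*al^2*u^2*ea + 4*al^2*u^2*ea + Rabs al * (2*u^2))) by (field; lra).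
  apply Rmult_le_compat_l. lra.
  eapply Rle_trans. apply Rabs_triang. eapply Rle_trans. apply Rplus_le_compat_r. apply Rabs_triang.
  assert (x^2 <= 4*al^2*u^2).
  { replace (x^2) with (Rabs x ^2) by apply pow2_abs. replace (4*al^2*u^2) with ((2*Rabs al*u)^2).
    apply pow_incr. split; auto. apply Rabs_pos. rewrite <- (pow2_abs al). ring. }
  assert (y^2 <= 4*al^2*u^2).
  { replace (y^2) with (Rabs y ^2) by apply pow2_abs. replace (4*al^2*u^2) with ((2*Rabs al*u)^2).
    apply pow_incr. split; auto. apply Rabs_pos. rewrite <- (pow2_abs al). ring. }
  assert (x^2 * exp (Rabs x) <= 4*al^2*u^2*ea) by (apply Rmult_le_compat; auto; [apply pow2_ge_0| left; apply exp_pos]).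
  assert (y^2 * exp (Rabs y) <= 4*al^2*u^2*ea) by (apply Rmult_le_compat; auto; [apply pow2_ge_0| left; apply exp_pos]).
  lra.
- rewrite Rabs_mult, (Rabs_right h0), (Rabs_right (exp x)) by lra.
  apply Rmult_le_compat_l. lra. apply Rle_trans with (exp (Rabs x)). apply exp_le. apply Rle_abs. auto.
- rewrite Rabs_mult, (Rabs_right h0), (Rabs_right (exp y)) by lra.
  apply Rmult_le_compat_l. lra. apply Rle_trans with (exp (Rabs y)). apply exp_le. apply Rle_abs. auto.
Qed.

Lemma poly_exp y : 0 <= y -> y <= exp y /\ y^2 <= 4 * exp y /\ y^3 <= 27 * exp y.
Proof.
intros Hy. split; [|split].
- assert (H := exp_ineq1_le y). lra.
- assert (H := exp_ineq1_le (y/2)). replace (exp y) with (exp (y/2) ^ 2).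
  2:{ simpl. rewrite Rmult_1_r, <- exp_plus. f_equal. field. }
  assert (0 <= 1 + y/2) by lra.
  assert ((1+y/2)^2 <= exp (y/2)^2) by (apply pow_incr; lra). nra.
- assert (H := exp_ineq1_le (y/3)). replace (exp y) with (exp (y/3) ^ 3).
  2:{ simpl. rewrite Rmult_1_r, <- !exp_plus. f_equal. field. }
  assert (0 <= 1 + y/3) by lra.
  assert ((1+y/3)^3 <= exp (y/3)^3) by (apply pow_incr; lra).
  assert (y^3 <= 27 * (1+y/3)^3). { assert (0 <= y^2) by nra. nra. } lra.
Qed.

Lemma aa_pos C r : 0 < r -> 0 < C < 1 + r*r -> 0 < aa C r.
Proof.
intros Hr [HC1 HC2]. unfold aa.
assert (Hm : 0 < 1 + r*r) by nra.
assert (H1 : /(1+r*r) < /C) by (apply Rinv_lt_contravar; nra).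
assert (H2 : 2/(1+r*r) - 2*(1-r*r)/((1+r*r)*(1+r*r)) = 4*(r*r)/((1+r*r)*(1+r*r))) by (field; lra).
assert (0 < 4*(r*r)/((1+r*r)*(1+r*r))) by (apply Rdiv_lt_0_compat; nra).
unfold Rdiv in *. lra.
Qed.

Lemma kk_pos C r : 0 < r -> 0 < C < 1 + r*r -> 0 < kk C r.
Proof.
intros Hr [HC1 HC2]. unfold kk.
assert (H1 : / (1+r*r) < / C) by (apply Rinv_lt_contravar; nra).
unfold Rdiv. lra.
Qed.

Definition Hf q C r al n x := hh al x * exp (n * gg q C r x).

Lemma tpoly n a t : 0 < n -> 0 < a ->
  (t^2 + n*t^4 + n^2*t^6) * exp (-(n*a*t^2/4)) <= (8/a + 256/a^2 + 13824/a^3) / n * exp (-(n*a/8*(t*t))).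
Proof.
intros Hn Ha. set (y := n*a*t^2/8).
assert (Hy : 0 <= y) by (unfold y; assert (0 <= t^2) by apply pow2_ge_0; apply Rmult_le_pos; [|lra]; apply Rmult_le_pos; nra).
destruct (poly_exp y Hy) as [P1 [P2 P3]].
assert (Et2 : t^2 = 8*y/(n*a)) by (unfold y; field; lra).
assert (Ee : exp (-(n*a*t^2/4)) = exp (-(n*a/8*(t*t))) * exp (-y)).
{ rewrite <- exp_plus. f_equal. unfold y. simpl. field. }
rewrite Ee.
replace (t^2 + n*t^4 + n^2*t^6) with (t^2 + n*(t^2)^2 + n^2*(t^2)^3) by ring.
rewrite Et2.
assert (Hey : 0 < exp y) by apply exp_pos.
assert (Hem : exp (-y) = / exp y) by apply exp_Ropp.
rewrite Hem.
assert (E0 : 0 < exp (-(n*a/8*(t*t)))) by apply exp_pos.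
rewrite (Rmult_comm (exp (-(n*a/8*(t*t))))), <- Rmult_assoc.
apply Rmult_le_compat_r. lra.
assert (0 < /a) by (apply Rinv_0_lt_compat; auto).
assert (0 < /a^2) by (apply Rinv_0_lt_compat; apply pow_lt; auto).
assert (0 < /a^3) by (apply Rinv_0_lt_compat; apply pow_lt; auto).
assert (Hb : 8/a*y + 64/a^2*y^2 + 512/a^3*y^3 <= (8/a + 256/a^2 + 13824/a^3) * exp y).
{ unfold Rdiv. nra. }
replace ((8*y/(n*a) + n*(8*y/(n*a))^2 + n^2*(8*y/(n*a))^3) * / exp y) with
  ((8/a*y + 64/a^2*y^2 + 512/a^3*y^3) / (n * exp y)) by (field; repeat split; lra).
apply (Rmult_le_reg_r (n * exp y)). nra.
unfold Rdiv. rewrite Rmult_assoc, Rinv_l by nra.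
replace ((8 * / a + 256 * / a ^ 2 + 13824 * / a ^ 3) * / n * (n * exp y)) with
  ((8 * / a + 256 * / a ^ 2 + 13824 * / a ^ 3) * exp y) by (field; lra).
unfold Rdiv in Hb. lra.
Qed.

Lemma pw al q C r : 0 < r -> 0 < C < 1 + r*r -> q = r - C*r/(1+r*r) ->
  exists d K3, 0 < d /\ d <= r - q /\ d <= r/2 /\ 0 <= K3 /\
   forall n t, 1 <= n -> 0 <= t <= d ->
   Rabs (Hf q C r al n (r+t) + Hf q C r al n (r-t) - 2 * hh al r * exp (-(n * aa C r / 2 * (t*t))))
     <= K3 / n * exp (-(n * aa C r / 8 * (t*t))).
Proof.
intros Hr HC Hq.
assert (Ha := aa_pos C r Hr HC). set (a := aa C r) in *.
destruct (ww_bounds q C r Hr ltac:(lra) Hq) as [d1 [D [B [Hd1 [HD [HB Hw]]]]]].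
destruct (h_bounds al r Hr) as [d2 [A1 [A2 [Hh [Hd2 [HA1 [HA2 Hhb]]]]]]].
assert (Hrq : 0 < r - q).
{ subst q. assert (0 < C*r/(1+r*r)) by (apply Rdiv_lt_0_compat; nra). lra. }
set (d := Rmin d1 (Rmin d2 (Rmin (r-q) (Rmin (r/2) (a/(4*(D+1))))))).
assert (Hd : 0 < d).
{ unfold d. repeat apply Rmin_pos; try lra. apply Rdiv_lt_0_compat; lra. }
assert (Hdd1 : d <= d1) by (unfold d; apply Rmin_l).
assert (Hdd2 : d <= d2) by (unfold d; eapply Rle_trans; [apply Rmin_r| apply Rmin_l]).
assert (Hdd3 : d <= r - q) by (unfold d; eapply Rle_trans; [apply Rmin_r| eapply Rle_trans; [apply Rmin_r| apply Rmin_l]]).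
assert (Hdd4 : d <= r/2) by (unfold d; eapply Rle_trans; [apply Rmin_r| eapply Rle_trans; [apply Rmin_r| eapply Rle_trans; [apply Rmin_r| apply Rmin_l]]]).
assert (Hdd5 : d <= a/(4*(D+1))) by (unfold d; eapply Rle_trans; [apply Rmin_r| eapply Rle_trans; [apply Rmin_r| eapply Rle_trans; [apply Rmin_r| apply Rmin_r]]]).
set (h0 := hh al r).
set (K1 := 2 * Hh * D^2 + A2 + Rabs h0 * B + 2 * A1 * D).
assert (HHh : 0 <= Hh).
{ destruct (Hhb 0 ltac:(lra)) as [_ [_ [_ [H _]]]]. eapply Rle_trans; [apply Rabs_pos|apply H]. }
assert (HK1 : 0 <= K1).
{ unfold K1. assert (0 <= D^2) by apply pow2_ge_0. assert (0 <= Rabs h0) by apply Rabs_pos.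
  assert (0 <= Hh * D^2) by (apply Rmult_le_pos; auto). assert (0 <= Rabs h0 * B) by (apply Rmult_le_pos; auto).
  assert (0 <= A1 * D) by (apply Rmult_le_pos; auto). lra. }
exists d, (K1 * (8/a + 256/a^2 + 13824/a^3)).
split; auto. split; auto. split; auto. split.
{ apply Rmult_le_pos; auto.
  assert (0 < /a) by (apply Rinv_0_lt_compat; auto).
  assert (0 < /a^2) by (apply Rinv_0_lt_compat; apply pow_lt; auto).
  assert (0 < /a^3) by (apply Rinv_0_lt_compat; apply pow_lt; auto). unfold Rdiv; lra. }
intros n t Hn Ht.
destruct (Hw t ltac:(lra)) as [W1 [W2 W3]].
destruct (Hhb t ltac:(lra)) as [H1 [H2 [H3 [H4 H5]]]].
assert (Hcond : D * t^3 <= a * t^2 / 4).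
{ assert (D * t <= a / 4).
  { apply Rle_trans with ((D+1) * d). apply Rmult_le_compat; lra.
    apply (Rmult_le_reg_l (/(D+1))). apply Rinv_0_lt_compat; lra.
    rewrite <- Rmult_assoc, Rinv_l, Rmult_1_l by lra.
    apply Rle_trans with (a/(4*(D+1))); auto. right. field. lra. }
  assert (0 <= t^2) by apply pow2_ge_0.
  replace (D*t^3) with ((D*t)*t^2) by ring. replace (a*t^2/4) with ((a/4)*t^2) by field.
  apply Rmult_le_compat_r; auto. }
assert (SB := S_bound h0 (hh al (r+t)) (hh al (r-t)) (ww q C r t) (ww q C r (-t)) A1 A2 Hh D B n a t
   ltac:(lra) ltac:(lra) Ha HA1 HA2 HD HB H1 H2 H3 H4 H5 W1 W2 W3 Hcond).
fold K1 in SB.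
assert (Gp : gg q C r (r+t) = ww q C r t - a * t^2/2) by (unfold ww; fold a; ring).
assert (Gm : gg q C r (r-t) = ww q C r (-t) - a * t^2/2).
{ unfold ww. fold a. assert (Em : r + -t = r - t) by ring. rewrite Em. field. }
unfold Hf. rewrite Gp, Gm.
set (wp := ww q C r t) in *. set (wm := ww q C r (-t)) in *.
set (G := exp (-(n * a / 2 * (t*t)))).
assert (E1 : exp (n * (wp - a*t^2/2)) = exp (n*wp) * G) by (unfold G; rewrite <- exp_plus; f_equal; simpl; field).
assert (E2 : exp (n * (wm - a*t^2/2)) = exp (n*wm) * G) by (unfold G; rewrite <- exp_plus; f_equal; simpl; field).
rewrite E1, E2.
replace (hh al (r+t) * (exp (n*wp) * G) + hh al (r-t) * (exp (n*wm) * G) - 2 * h0 * G) with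
  (G * (hh al (r+t) * exp (n*wp) + hh al (r-t) * exp (n*wm) - 2*h0)) by ring.
assert (HG : 0 < G) by apply exp_pos.
rewrite Rabs_mult, (Rabs_right G) by lra.
apply Rle_trans with (G * (K1 * (t^2 + n*t^4 + n^2*t^6) * exp (n*a*t^2/4))).
{ apply Rmult_le_compat_l; lra. }
assert (EG : G * exp (n*a*t^2/4) = exp (-(n*a*t^2/4))) by (unfold G; rewrite <- exp_plus; f_equal; simpl; field).
replace (G * (K1 * (t^2 + n*t^4 + n^2*t^6) * exp (n*a*t^2/4))) with
  (K1 * ((t^2 + n*t^4 + n^2*t^6) * (G * exp (n*a*t^2/4)))) by ring.
rewrite EG.
replace (K1 * (8/a + 256/a^2 + 13824/a^3) / n * exp (-(n*a/8*(t*t)))) with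
  (K1 * ((8/a + 256/a^2 + 13824/a^3) / n * exp (-(n*a/8*(t*t))))) by (field; lra).
apply Rmult_le_compat_l; auto. apply tpoly; lra.
Qed.

Lemma Hf_cont q C r al n x : 0 < x -> 0 < C -> continuous (Hf q C r al n) x.
Proof.
intros Hx HC. unfold Hf, hh, gg.
apply (ex_derive_continuous (fun x => exp (al * ln x) * exp (n * (ln (1 + x*x) - ln (1 + r*r) - ((x-q)*(x-q) - (r-q)*(r-q))/C)))).
auto_derive. repeat split; try lra; nra.
Qed.

Lemma RInt_scalR (f : R -> R) c a b : ex_RInt f a b -> RInt (fun x => c * f x) a b = c * RInt f a b.
Proof.
intros H. apply is_RInt_unique.
apply (is_RInt_scal f a b c _ (RInt_correct _ _ _ H)).
Qed.

Lemma RInt_plusR (f g : R -> R) a b : ex_RInt f a b -> ex_RInt g a b ->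
  RInt (fun x => f x + g x) a b = RInt f a b + RInt g a b.
Proof.
intros H1 H2. apply is_RInt_unique.
apply (is_RInt_plus f g a b _ _ (RInt_correct _ _ _ H1) (RInt_correct _ _ _ H2)).
Qed.

Lemma ex_RInt_plusR (f g : R -> R) a b : ex_RInt f a b -> ex_RInt g a b ->
  ex_RInt (fun x => f x + g x) a b.
Proof.
intros H1 H2. exists (RInt f a b + RInt g a b).
apply (is_RInt_plus f g a b _ _ (RInt_correct _ _ _ H1) (RInt_correct _ _ _ H2)).
Qed.

Lemma gauss_ex c a b : ex_RInt (fun t => exp (-(c*(t*t)))) a b.
Proof.
apply (ex_RInt_continuous (V:=R_CompleteNormedModule)). intros z _.
apply (ex_derive_continuous (fun t => exp (-(c*(t*t))))). auto_derive. auto.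
Qed.

Lemma gauss_le c Y : 0 < c -> 0 <= Y -> RInt (fun t => exp (-(c*(t*t)))) 0 Y <= (sqrt PI / 2) / sqrt c.
Proof.
intros Hc HY. rewrite gscale by auto. assert (0 < sqrt c) by (apply sqrt_lt_R0; auto).
unfold Rdiv. apply Rmult_le_compat_r. left; apply Rinv_0_lt_compat; auto.
apply gI_le. apply Rmult_le_pos; lra.
Qed.

Lemma gauss_near c Y : 0 < c -> 0 < Y ->
  Rabs (RInt (fun t => exp (-(c*(t*t)))) 0 Y - (sqrt PI / 2) / sqrt c) <= 2 / (sqrt c * (c * (Y*Y))).
Proof.
intros Hc HY. rewrite gscale by auto. assert (Hs : 0 < sqrt c) by (apply sqrt_lt_R0; auto).
assert (HY2 : 0 <= sqrt c * Y) by (apply Rmult_le_pos; lra).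
assert (H1 := gI_le _ HY2). assert (H2 := gI_ge _ HY2).
assert (Ez : sqrt c * Y * (sqrt c * Y) = c * (Y*Y)).
{ replace (sqrt c * Y * (sqrt c * Y)) with ((sqrt c * sqrt c) * (Y*Y)) by ring. rewrite sqrt_sqrt; lra. }
rewrite Ez in H2.
assert (Hz : 0 < c * (Y*Y)) by (apply Rmult_lt_0_compat; nra).
assert (He : exp (-(c*(Y*Y))) <= / (c*(Y*Y))).
{ destruct (poly_exp (c*(Y*Y)) ltac:(lra)) as [P _]. rewrite exp_Ropp.
  apply Rinv_le_contravar; auto. }
replace (gI (sqrt c * Y) / sqrt c - sqrt PI / 2 / sqrt c) with (- ((sqrt PI / 2 - gI (sqrt c * Y)) / sqrt c)) by (field; lra).
rewrite Rabs_Ropp. rewrite Rabs_right.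
2:{ apply Rle_ge, Rdiv_le_0_compat; lra. }
replace (2 / (sqrt c * (c*(Y*Y)))) with (2 * / (c*(Y*Y)) / sqrt c) by (field; lra).
unfold Rdiv. apply Rmult_le_compat_r. left; apply Rinv_0_lt_compat; auto. lra.
Qed.

Lemma mid al q C r : 0 < r -> 0 < C < 1 + r*r -> q = r - C*r/(1+r*r) ->
  exists d K, 0 < d /\ d <= r - q /\ d <= r/2 /\
   forall n, 1 <= n ->
   Rabs (RInt (Hf q C r al n) (r-d) (r+d) - hh al r * sqrt (2*PI/(n * aa C r))) <= K / (n * sqrt n).
Proof.
intros Hr HC Hq.
assert (Ha := aa_pos C r Hr HC).
destruct (pw al q C r Hr HC Hq) as [d [K3 [Hd [Hdq [Hdr [HK3 Hpw]]]]]].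
set (a := aa C r) in *.
set (h0 := hh al r).
assert (Hh0 : 0 < h0) by apply exp_pos.
assert (Hrq : 0 < r - q) by lra.
exists d, (K3 * (sqrt PI / 2) / sqrt (a/8) + 4 * h0 / (sqrt (a/2) * (a/2 * (d*d)))).
split; auto. split; auto. split; auto.
intros n Hn.
assert (Hn0 : 0 < n) by lra.
assert (Hsn : 0 < sqrt n) by (apply sqrt_lt_R0; lra).
set (F := Hf q C r al n).
assert (HFc : forall x, 0 < x -> continuous F x) by (intros; apply Hf_cont; lra).
assert (HFex : forall x y, 0 < x -> x <= y -> ex_RInt F x y).
{ intros x y Hx Hy. apply (ex_RInt_continuous (V:=R_CompleteNormedModule)).
  intros z Hz. apply HFc. rewrite Rmin_left in Hz by lra. lra. }
assert (Dec : RInt F (r-d) (r+d) = RInt (fun t => F (t + r) + F (r - t)) 0 d).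
{ rewrite <- (RInt_Chasles F (r-d) r (r+d)).
  2:{ apply HFex; lra. } 2:{ apply HFex; lra. }
  rewrite RInt_plusR.
  2:{ apply (ex_RInt_continuous (V:=R_CompleteNormedModule)). intros z Hz.
      rewrite Rmin_left, Rmax_right in Hz by lra.
      apply (continuous_comp (fun t => t + r) F). apply (ex_derive_continuous (fun t => t + r)). auto_derive; auto.
      apply HFc. lra. }
  2:{ apply (ex_RInt_continuous (V:=R_CompleteNormedModule)). intros z Hz.
      rewrite Rmin_left, Rmax_right in Hz by lra.
      apply (continuous_comp (fun t => r - t) F). apply (ex_derive_continuous (fun t => r - t)). auto_derive; auto.
      apply HFc. lra. }
  rewrite RInt_shift. 2:{ apply HFex; lra. }
  rewrite RInt_refl. 2:{ apply HFex; lra. }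
  replace (0 + r) with r by ring. replace (d + r) with (r + d) by ring. replace (r - 0) with r by ring.
  simpl. unfold plus; simpl. ring. }
set (G2 := fun t => 2 * h0 * exp (-(n * a / 2 * (t*t)))).
set (G8 := fun t => K3 / n * exp (-(n * a / 8 * (t*t)))).
assert (Hna2 : 0 < n * a / 2) by (apply Rdiv_lt_0_compat; [apply Rmult_lt_0_compat|]; lra).
assert (Hna8 : 0 < n * a / 8) by (apply Rdiv_lt_0_compat; [apply Rmult_lt_0_compat|]; lra).
assert (ExFm : ex_RInt (fun t => F (t + r) + F (r - t)) 0 d).
{ apply (ex_RInt_continuous (V:=R_CompleteNormedModule)). intros z Hz.
  rewrite Rmin_left, Rmax_right in Hz by lra.
  apply (continuous_plus (fun t => F (t + r)) (fun t => F (r - t))).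
  apply (continuous_comp (fun t => t + r) F). apply (ex_derive_continuous (fun t => t + r)). auto_derive; auto.
  apply HFc. lra.
  apply (continuous_comp (fun t => r - t) F). apply (ex_derive_continuous (fun t => r - t)). auto_derive; auto.
  apply HFc. lra. }
assert (ExG2 : ex_RInt G2 0 d).
{ apply (ex_RInt_continuous (V:=R_CompleteNormedModule)). intros z _. unfold G2.
  apply (ex_derive_continuous (fun t => 2 * h0 * exp (-(n * a / 2 * (t*t))))). auto_derive. auto. }
assert (IG2 : RInt G2 0 d = 2 * h0 * RInt (fun t => exp (-(n*a/2*(t*t)))) 0 d).
{ unfold G2. apply RInt_scalR. apply gauss_ex. }
assert (IG8 : RInt G8 0 d = K3 / n * RInt (fun t => exp (-(n*a/8*(t*t)))) 0 d).
{ unfold G8. apply RInt_scalR. apply gauss_ex. }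
assert (ExG8 : ex_RInt G8 0 d).
{ apply (ex_RInt_continuous (V:=R_CompleteNormedModule)). intros z _. unfold G8.
  apply (ex_derive_continuous (fun t => K3 / n * exp (-(n * a / 8 * (t*t))))). auto_derive. auto. }
assert (B1 : RInt (fun t => F (t + r) + F (r - t)) 0 d <= RInt G2 0 d + RInt G8 0 d).
{ rewrite <- RInt_plusR by auto. apply RInt_le; auto. lra. apply ex_RInt_plusR; auto.
  intros t Ht. assert (H := Hpw n t Hn ltac:(lra)). apply abs_le in H. unfold G2, G8, F.
  replace (t + r) with (r + t) by ring. fold h0 in H. lra. }
assert (B2 : RInt G2 0 d - RInt G8 0 d <= RInt (fun t => F (t + r) + F (r - t)) 0 d).
{ replace (RInt G2 0 d - RInt G8 0 d) with (RInt G2 0 d + (-1) * RInt G8 0 d) by ring.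
  assert (ExN : ex_RInt (fun x => -1 * G8 x) 0 d).
  { apply (ex_RInt_continuous (V:=R_CompleteNormedModule)). intros z _. unfold G8.
    apply (ex_derive_continuous (fun t => -1 * (K3 / n * exp (-(n * a / 8 * (t*t)))))). auto_derive. auto. }
  rewrite <- (RInt_scalR G8) by auto.
  rewrite <- (RInt_plusR G2 (fun x => -1 * G8 x)) by auto.
  apply RInt_le; auto. lra. apply ex_RInt_plusR; auto.
  intros t Ht. assert (H := Hpw n t Hn ltac:(lra)). apply abs_le in H. unfold G2, G8, F.
  replace (t + r) with (r + t) by ring. fold h0 in H. lra. }
assert (Hg8 := gauss_le (n*a/8) d Hna8 ltac:(lra)).
assert (Hg2 := gauss_near (n*a/2) d Hna2 Hd).
assert (ET : h0 * sqrt (2*PI/(n*a)) = 2 * h0 * ((sqrt PI / 2) / sqrt (n*a/2))).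
{ replace (2*PI/(n*a)) with (PI / (n*a/2)) by (field; lra).
  rewrite sqrt_div_alt by lra. field. apply Rgt_not_eq, sqrt_lt_R0. auto. }
rewrite Dec, ET.
assert (Es2 : sqrt (n*a/2) = sqrt n * sqrt (a/2)).
{ rewrite <- sqrt_mult by lra. f_equal. field. }
assert (Es8 : sqrt (n*a/8) = sqrt n * sqrt (a/8)).
{ rewrite <- sqrt_mult by lra. f_equal. field. }
assert (Hsa2 : 0 < sqrt (a/2)) by (apply sqrt_lt_R0; lra).
assert (Hsa8 : 0 < sqrt (a/8)) by (apply sqrt_lt_R0; lra).
set (I8 := RInt (fun t => exp (-(n*a/8*(t*t)))) 0 d) in *.
set (I2 := RInt (fun t => exp (-(n*a/2*(t*t)))) 0 d) in *.
assert (HI8 : 0 <= I8).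
{ unfold I8. apply RInt_ge_0. lra. apply gauss_ex. intros; left; apply exp_pos. }
assert (Z1 : K3 / n * I8 <= K3 * (sqrt PI / 2) / sqrt (a/8) / (n * sqrt n)).
{ apply Rle_trans with (K3 / n * ((sqrt PI / 2) / sqrt (n*a/8))).
  apply Rmult_le_compat_l; auto. apply Rdiv_le_0_compat; lra.
  rewrite Es8. right. field. repeat split; lra. }
assert (Z2 : Rabs (2*h0*I2 - 2*h0*((sqrt PI / 2) / sqrt (n*a/2))) <= 4 * h0 / (sqrt (a/2) * (a/2*(d*d))) / (n * sqrt n)).
{ replace (2*h0*I2 - 2*h0*((sqrt PI / 2) / sqrt (n*a/2))) with ((2*h0) * (I2 - (sqrt PI / 2) / sqrt (n*a/2))) by ring.
  rewrite Rabs_mult, (Rabs_right (2*h0)) by lra.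
  apply Rle_trans with (2*h0 * (2 / (sqrt (n*a/2) * (n*a/2*(d*d))))).
  apply Rmult_le_compat_l; lra.
  rewrite Es2. right. field. repeat split; try lra. }
rewrite IG2, IG8 in *.
apply abs_le in Z2.
apply abs_le_intro.
assert (0 <= K3 * (sqrt PI / 2) / sqrt (a/8) / (n * sqrt n)).
{ apply Rle_trans with (K3 / n * I8); auto. apply Rmult_le_pos; auto. apply Rdiv_le_0_compat; lra. }
replace ((K3 * (sqrt PI / 2) / sqrt (a / 8) + 4 * h0 / (sqrt (a / 2) * (a / 2 * (d * d)))) / (n * sqrt n))
  with (K3 * (sqrt PI / 2) / sqrt (a/8) / (n * sqrt n) + 4 * h0 / (sqrt (a/2) * (a/2*(d*d))) / (n * sqrt n))
  by (field; repeat split; try lra; nra).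
lra.
Qed.

Lemma outer_pt al q C r n d x : 0 < r -> 0 < C < 1 + r*r -> q = r - C*r/(1+r*r) ->
  0 < q -> q <= x -> d*d <= (x-r)*(x-r) -> 1 <= n ->
  0 <= Hf q C r al n x <=
  exp (Rabs al * (Rabs (ln q) + r) + al^2 / (2 * kk C r)) * exp (-((n-1) * kk C r * (d*d))) *
  exp (-(kk C r / 2 * ((x-r)*(x-r)))).
Proof.
intros Hr HC Hq Hq0 Hx Hd Hn.
assert (Hk := kk_pos C r Hr HC). set (k := kk C r) in *.
assert (Hg := gg_global q C r x Hr ltac:(lra) Hq). fold k in Hg.
unfold Hf, hh. split.
{ apply Rmult_le_pos; left; apply exp_pos. }
rewrite <- !exp_plus. apply exp_le.
set (v := x - r) in *.
assert (Hln : Rabs (ln x) <= Rabs (ln q) + x).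
{ destruct (Rle_dec 0 (ln x)).
  - rewrite Rabs_right by lra. assert (ln x <= x - 1) by (apply ln_le_sub1; lra).
    assert (0 <= Rabs (ln q)) by apply Rabs_pos. lra.
  - rewrite Rabs_left by lra. assert (ln q <= ln x).
    { destruct (Rle_lt_or_eq_dec _ _ Hx). left; apply ln_increasing; lra. subst; lra. }
    assert (- ln q <= Rabs (ln q)) by (rewrite <- Rabs_Ropp; apply Rle_abs). lra. }
assert (H1 : al * ln x <= Rabs al * (Rabs (ln q) + r + Rabs v)).
{ apply Rle_trans with (Rabs al * Rabs (ln x)).
  rewrite <- Rabs_mult. apply Rle_abs.
  apply Rmult_le_compat_l. apply Rabs_pos.
  assert (x <= r + Rabs v) by (unfold v; assert (x - r <= Rabs (x-r)) by apply Rle_abs; lra). lra. }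
assert (H2 : Rabs al * Rabs v <= k/2 * (v*v) + al^2/(2*k)).
{ assert (0 <= k/2 * (Rabs v - Rabs al / k)^2) by (apply Rmult_le_pos; [lra| apply pow2_ge_0]).
  replace (v*v) with (Rabs v ^2) by (rewrite pow2_abs; ring).
  replace (al^2) with (Rabs al ^2) by apply pow2_abs.
  replace (k/2 * (Rabs v - Rabs al / k)^2) with (k/2 * Rabs v ^2 - Rabs al * Rabs v + Rabs al ^2 / (2*k)) in H by (field; lra).
  lra. }
assert (H3 : n * gg q C r x <= - (n * k * (v*v))).
{ apply Rle_trans with (n * (-k * (v*v))). apply Rmult_le_compat_l; lra. right; ring. }
assert (H4 : (n-1) * k * (d*d) <= (n-1) * k * (v*v)).
{ apply Rmult_le_compat_l; auto. apply Rmult_le_pos; lra. }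
assert (0 <= Rabs v) by apply Rabs_pos.
lra.
Qed.

Lemma decay_bound eps n : 0 < eps -> 1 <= n ->
  exp (-((n-1) * eps)) <= 4 * exp eps / (eps*eps) / (n * sqrt n).
Proof.
intros He Hn.
assert (Hsn : 0 < sqrt n) by (apply sqrt_lt_R0; lra).
assert (Hsn1 : sqrt n <= n).
{ rewrite <- (sqrt_square n) at 2 by lra. apply sqrt_le_1_alt. nra. }
destruct (poly_exp (n*eps) ltac:(nra)) as [_ [P2 _]].
replace (-((n-1)*eps)) with (eps + - (n*eps)) by ring. rewrite exp_plus, exp_Ropp.
assert (Hee : 0 < exp eps) by apply exp_pos.
assert (Hen : 0 < exp (n*eps)) by apply exp_pos.
assert (Hne : 0 < n*eps) by nra.
apply Rle_trans with (exp eps * (4 / ((n*eps)^2))).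
{ apply Rmult_le_compat_l. lra.
  apply (Rmult_le_reg_r (exp (n*eps))); auto. rewrite Rinv_l by lra.
  apply (Rmult_le_reg_l ((n*eps)^2)). apply pow_lt; auto.
  replace ((n*eps)^2 * (4 / (n*eps)^2 * exp (n*eps))) with (4 * exp (n*eps)) by (field; lra). lra. }
replace (exp eps * (4 / (n*eps)^2)) with (4 * exp eps / (eps*eps) / (n * n)) by (field; lra).
unfold Rdiv at 1. unfold Rdiv at 2. apply Rmult_le_compat_l.
{ apply Rmult_le_pos. lra. left; apply Rinv_0_lt_compat; nra. }
apply Rinv_le_contravar. nra. apply Rmult_le_compat_l; lra.
Qed.

Lemma total al q C r : 0 < r -> 0 < C < 1 + r*r -> q = r - C*r/(1+r*r) ->
  exists b0 K, q <= b0 /\ forall n b, 1 <= n -> b0 <= b ->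
   Rabs (RInt (Hf q C r al n) q b - hh al r * sqrt (2*PI/(n * aa C r))) <= K / (n * sqrt n).
Proof.
intros Hr HC Hq.
assert (Hq0 : 0 < q).
{ subst q. assert (C * r / (1 + r*r) < r).
  { apply (Rmult_lt_reg_r (1+r*r)). nra. unfold Rdiv. rewrite Rmult_assoc, Rinv_l by nra. nra. }
  lra. }
destruct (mid al q C r Hr HC Hq) as [d [K [Hd [Hdq [Hdr Hmid]]]]].
assert (Hk := kk_pos C r Hr HC). set (k := kk C r) in *.
set (W0 := exp (Rabs al * (Rabs (ln q) + r) + al^2 / (2 * k))).
assert (HW0 : 0 < W0) by apply exp_pos.
set (eps := k * (d*d)). assert (Heps : 0 < eps) by (unfold eps; apply Rmult_lt_0_compat; [lra| apply Rmult_lt_0_compat; lra]).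
set (Ke := 4 * exp eps / (eps*eps)).
assert (HKe : 0 <= Ke) by (unfold Ke; apply Rdiv_le_0_compat; [assert (0 < exp eps) by apply exp_pos; lra| apply Rmult_lt_0_compat; lra]).
set (Gk := sqrt PI / 2 / sqrt (k/2)).
assert (HGk : 0 <= Gk).
{ unfold Gk. apply Rdiv_le_0_compat. assert (0 <= sqrt PI) by apply sqrt_pos. lra. apply sqrt_lt_R0; lra. }
exists (r + d), (K + (r + Gk) * W0 * Ke).
split. lra.
intros n b Hn Hb.
assert (Hsn : 0 < sqrt n) by (apply sqrt_lt_R0; lra).
set (F := Hf q C r al n).
set (En := exp (-((n-1) * k * (d*d)))).
assert (HEn : En <= Ke / (n * sqrt n)).
{ unfold En, Ke. replace ((n-1)*k*(d*d)) with ((n-1)*eps) by (unfold eps; ring). apply decay_bound; auto. }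
assert (HEn0 : 0 < En) by apply exp_pos.
assert (HFc : forall x, 0 < x -> continuous F x) by (intros; apply Hf_cont; lra).
assert (HFex : forall x y, 0 < x -> x <= y -> ex_RInt F x y).
{ intros x y Hx Hy. apply (ex_RInt_continuous (V:=R_CompleteNormedModule)).
  intros z Hz. apply HFc. rewrite Rmin_left in Hz by lra. lra. }
assert (Hpt := fun x => outer_pt al q C r n d x Hr HC Hq Hq0).
fold k W0 in Hpt.
rewrite <- (RInt_Chasles F q (r-d) b) by (apply HFex; lra).
rewrite <- (RInt_Chasles F (r-d) (r+d) b) by (apply HFex; lra).
simpl. unfold plus; simpl.
assert (Lo : 0 <= RInt F q (r-d) <= r * (W0 * En)).
{ split.
  - apply RInt_ge_0. lra. apply HFex; lra. intros x Hx. apply (Hpt x); try lra. nra.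
  - apply Rle_trans with (RInt (fun _ => W0 * En) q (r-d)).
    apply RInt_le. lra. apply HFex; lra. apply ex_RInt_const.
    intros x Hx. destruct (Hpt x ltac:(lra) ltac:(nra) Hn) as [_ H].
    fold En in H. apply Rle_trans with (1 := H).
    assert (exp (-(k/2 * ((x-r)*(x-r)))) <= 1).
    { rewrite <- exp_0. apply exp_le. assert (0 <= (x-r)*(x-r)) by nra.
      assert (0 <= k/2 * ((x-r)*(x-r))) by (apply Rmult_le_pos; lra). lra. }
    assert (0 < W0 * En) by nra. nra.
    rewrite RInt_const. unfold scal; simpl; unfold mult; simpl.
    assert (0 < W0 * En) by nra. nra. }
set (g := fun t => exp (-(k/2 * (t*t)))).
assert (Hg0 : forall t, 0 <= g t) by (intros; left; apply exp_pos).
assert (Up : 0 <= RInt F (r+d) b <= W0 * En * Gk).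
{ split.
  - apply RInt_ge_0. lra. apply HFex; lra. intros x Hx. apply (Hpt x); try lra. nra.
  - set (f := fun x => exp (-(k/2 * ((x-r)*(x-r))))).
    assert (Exf : forall u v, ex_RInt f u v).
    { intros u v. apply (ex_RInt_continuous (V:=R_CompleteNormedModule)). intros z _. unfold f.
      apply (ex_derive_continuous (fun x => exp (-(k/2 * ((x-r)*(x-r)))))). auto_derive. auto. }
    apply Rle_trans with (RInt (fun x => (W0 * En) * f x) (r+d) b).
    { apply RInt_le. lra. apply HFex; lra.
      apply (ex_RInt_continuous (V:=R_CompleteNormedModule)). intros z _. unfold f.
      apply (ex_derive_continuous (fun x => W0 * En * exp (-(k/2 * ((x-r)*(x-r)))))). auto_derive. auto.
      intros x Hx. destruct (Hpt x ltac:(lra) ltac:(nra) Hn) as [_ H]. fold En in H. unfold f, F. lra. }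
    rewrite RInt_scalR by auto.
    apply Rmult_le_compat_l. nra.
    assert (E1 : RInt f (r+d) b = RInt g d (b - r)).
    { replace (r+d) with (d + r) by ring. replace b with ((b - r) + r) at 1 by ring.
      rewrite <- RInt_shift by (apply Exf).
      apply RInt_ext. intros x _. unfold f, g. f_equal. f_equal. f_equal. ring. }
    rewrite E1.
    assert (Exg : forall u v, ex_RInt g u v) by (intros; apply gauss_ex).
    apply Rle_trans with (RInt g 0 (b - r)).
    { rewrite <- (RInt_Chasles g 0 d (b-r)) by auto. simpl. unfold plus; simpl.
      assert (0 <= RInt g 0 d) by (apply RInt_ge_0; auto; lra). lra. }
    apply gauss_le; lra. }
assert (Hm := Hmid n Hn). fold F k in Hm.
apply abs_le in Hm. apply abs_le_intro.
replace ((K + (r + Gk) * W0 * Ke) / (n * sqrt n)) with (K / (n * sqrt n) + (r + Gk) * W0 * (Ke / (n * sqrt n))) by (field; split; lra).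
assert ((r + Gk) * W0 * En <= (r + Gk) * W0 * (Ke / (n * sqrt n))).
{ apply Rmult_le_compat_l; auto. apply Rmult_le_pos; lra. }
nra.
Qed.

Lemma Xint_eq q C r al n x : 0 < x -> 0 < C ->
  Xintegrand q C al n x = exp (n * (ln (1 + r*r) - (r-q)*(r-q)/C)) * Hf q C r al n x.
Proof.
intros Hx HC. unfold Xintegrand, Hf, hh, gg, Rpower.
rewrite <- !exp_plus. replace (x^2) with (x*x) by ring. f_equal. field. lra.
Qed.

Lemma laplace_generic al q C r : 0 < r -> 0 < C < 1 + r*r -> q = r - C*r/(1+r*r) ->
  exists K N, 0 < N /\ forall n, N <= n -> X_conv q C al n /\
   exists rho, Rabs rho <= K / n /\
   X q C al n = (exp (n * (ln (1 + r*r) - (r-q)*(r-q)/C)) * (hh al r * sqrt (2*PI/(n * aa C r)))) * (1 + rho).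
Proof.
intros Hr HC Hq.
assert (Hq0 : 0 < q).
{ subst q. assert (C * r / (1 + r*r) < r).
  { apply (Rmult_lt_reg_r (1+r*r)). nra. unfold Rdiv. rewrite Rmult_assoc, Rinv_l by nra. nra. }
  lra. }
assert (Ha := aa_pos C r Hr HC). set (a := aa C r) in *.
destruct (total al q C r Hr HC Hq) as [b0 [K [Hb0 Htot]]]. fold a in Htot.
set (h0 := hh al r). assert (Hh0 : 0 < h0) by apply exp_pos.
assert (Hs2 : 0 < sqrt (2*PI/a)) by (apply sqrt_lt_R0; apply Rdiv_lt_0_compat; [assert (H := PI_RGT_0); lra| lra]).
exists (K / (h0 * sqrt (2*PI/a))), 1. split. lra.
intros n Hn.
assert (Hsn : 0 < sqrt n) by (apply sqrt_lt_R0; lra).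
set (Phi := exp (n * (ln (1 + r*r) - (r-q)*(r-q)/C))).
assert (HPhi : 0 < Phi) by apply exp_pos.
set (T := h0 * sqrt (2*PI/(n*a))).
assert (ET : sqrt (2*PI/(n*a)) = sqrt (2*PI/a) / sqrt n).
{ replace (2*PI/(n*a)) with ((2*PI/a)/n) by (field; lra). apply sqrt_div_alt. lra. }
assert (HT : 0 < T) by (unfold T; rewrite ET; apply Rmult_lt_0_compat; [lra| apply Rdiv_lt_0_compat; lra]).
assert (Himp := improper (Xintegrand q C al n) q (Phi * T) (Phi * (K / (n * sqrt n))) b0).
destruct Himp as [Hconv Hbound].
- intros x Hx. unfold Xintegrand, Rpower.
  apply (ex_derive_continuous (fun x => exp (al * ln x) * exp (n * ln (1 + x^2)) * exp (- n * (x - q)^2 / C))).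
  auto_derive. repeat split; try lra. nra.
- intros x Hx. unfold Xintegrand, Rpower. apply Rmult_le_pos; [apply Rmult_le_pos|]; left; apply exp_pos.
- auto.
- intros b Hb.
  assert (E : RInt (Xintegrand q C al n) q b = Phi * RInt (Hf q C r al n) q b).
  { rewrite <- RInt_scalR.
    2:{ apply (ex_RInt_continuous (V:=R_CompleteNormedModule)). intros z Hz.
        rewrite Rmin_left in Hz by lra. apply Hf_cont; lra. }
    apply RInt_ext. intros x Hx. rewrite Rmin_left in Hx by lra. apply Xint_eq; lra. }
  rewrite E. replace (Phi * RInt (Hf q C r al n) q b - Phi * T) with (Phi * (RInt (Hf q C r al n) q b - T)) by ring.
  rewrite Rabs_mult, (Rabs_right Phi) by lra. apply Rmult_le_compat_l. lra.
  apply Htot; auto.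
- split. exact Hconv.
  exists ((X q C al n - Phi * T) / (Phi * T)). split.
  + unfold X. unfold Rdiv at 1. rewrite Rabs_mult, Rabs_inv, (Rabs_right (Phi * T)) by nra.
    apply (Rmult_le_reg_r (Phi * T)). nra. rewrite Rmult_assoc, Rinv_l, Rmult_1_r by nra.
    apply Rle_trans with (1 := Hbound).
    unfold T. rewrite ET. right. field. repeat split; lra.
  + fold Phi. fold h0. fold T. field. nra.
Qed.

Lemma sqrt_eq_sq x y : 0 <= y -> y * y = x -> sqrt x = y.
Proof. intros Hy Hx. subst x. apply sqrt_square. auto. Qed.

Theorem lemma6p4 (alpha : R) :
  X_asymp p c alpha
    (fun n => 3 * sqrt (PI / 5) / Rpower 2 (alpha / 2 + 1 / 2)
              * (Rpower (3 / 2) n / (exp (n / 6) * sqrt n)))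
  /\
  X_asymp (2 * p) (2 * c) alpha
    (fun n => 3 * sqrt (PI / 7) * Rpower 2 (alpha / 2)
              * (Rpower 3 n / (exp (n / 3) * sqrt n))).
Proof.
assert (Hs : 0 < sqrt 2) by (apply sqrt_lt_R0; lra).
assert (Hss : sqrt 2 * sqrt 2 = 2) by (apply sqrt_sqrt; lra).
assert (HPI := PI_RGT_0).
assert (Hln2 : ln (sqrt 2) = ln 2 / 2) by (rewrite <- Hss at 2; rewrite ln_mult by lra; field).
assert (Hexp2 : exp (ln 2 / 2) = sqrt 2) by (rewrite <- Hln2; apply exp_ln; auto).
split.
- set (r := 1 / sqrt 2).
  assert (Hr : 0 < r) by (unfold r; apply Rdiv_lt_0_compat; lra).
  assert (Hrr : r * r = 1/2) by (unfold r; replace (1/sqrt 2 * (1/sqrt 2)) with (1/(sqrt 2 * sqrt 2)) by (field; lra); rewrite Hss; reflexivity).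
  assert (HC : 0 < c < 1 + r*r) by (unfold c; lra).
  assert (Hq : p = r - c*r/(1+r*r)).
  { rewrite Hrr. unfold p, r, c. field. lra. }
  destruct (laplace_generic alpha p c r Hr HC Hq) as [K [N [HN Hmain]]].
  exists K, N. split; auto. intros n Hn.
  destruct (Hmain n Hn) as [Hconv [rho [Hrho HX]]].
  split; auto. exists rho. split; auto. rewrite HX. f_equal.
  assert (Hn0 : 0 < n) by lra.
  assert (Hsn : 0 < sqrt n) by (apply sqrt_lt_R0; lra).
  assert (Ea : aa c r = 20/9) by (unfold aa; rewrite Hrr; unfold c; field).
  rewrite Ea, Hrr.
  assert (Ephi : exp (n * (ln (1 + 1/2) - (r-p)*(r-p)/c)) = Rpower (3/2) n / exp (n/6)).
  { unfold Rpower.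
    assert (Ed : exp (n*ln(3/2)) / exp (n/6) = exp (n*ln(3/2) - n/6)).
    { unfold Rminus. rewrite exp_plus, exp_Ropp. field. apply Rgt_not_eq, exp_pos. }
    rewrite Ed. f_equal.
    replace (1 + 1/2) with (3/2) by field.
    assert (Erp : (r - p) * (r - p) = 1/8).
    { unfold r, p. replace (1/sqrt 2 - 1/(2*sqrt 2)) with (1/(2*sqrt 2)) by (field; lra).
      replace (1/(2*sqrt 2) * (1/(2*sqrt 2))) with (1/(4*(sqrt 2*sqrt 2))) by (field; lra).
      rewrite Hss. field. }
    rewrite Erp. unfold c. field. }
  rewrite Ephi.
  assert (Eh : hh alpha r = / exp (alpha / 2 * ln 2)).
  { unfold hh, r. rewrite <- exp_Ropp. f_equal. unfold Rdiv. rewrite Rmult_1_l, ln_Rinv by auto.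
    rewrite Hln2. field. }
  assert (Ep : Rpower 2 (alpha/2 + 1/2) = exp (alpha / 2 * ln 2) * sqrt 2).
  { unfold Rpower. rewrite <- Hexp2, <- exp_plus. f_equal. field. }
  rewrite Eh, Ep.
  assert (Esq : sqrt (2*PI/(n*(20/9))) = 3 * sqrt (PI/5) / (sqrt 2 * sqrt n)).
  { apply sqrt_eq_sq.
    apply Rdiv_le_0_compat. assert (0 <= sqrt (PI/5)) by apply sqrt_pos. lra. nra.
    assert (Hp5 : sqrt (PI/5) * sqrt (PI/5) = PI/5) by (apply sqrt_sqrt; lra).
    assert (Hnn : sqrt n * sqrt n = n) by (apply sqrt_sqrt; lra).
    replace (3 * sqrt (PI/5) / (sqrt 2 * sqrt n) * (3 * sqrt (PI/5) / (sqrt 2 * sqrt n))) with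
      (9 * (sqrt (PI/5) * sqrt (PI/5)) / ((sqrt 2 * sqrt 2) * (sqrt n * sqrt n))) by (field; lra).
    rewrite Hp5, Hss, Hnn. field. lra. }
  rewrite Esq.
  assert (0 < exp (alpha/2 * ln 2)) by apply exp_pos.
  assert (0 < exp (n/6)) by apply exp_pos.
  field. repeat split; lra.
- set (r := sqrt 2).
  assert (Hr : 0 < r) by auto.
  assert (Hrr : r * r = 2) by auto.
  assert (HC : 0 < 2 * c < 1 + r*r) by (unfold c; lra).
  assert (Hq : 2 * p = r - (2*c)*r/(1+r*r)).
  { rewrite Hrr. unfold p, r, c.
    replace (2*(1/(2*sqrt 2))) with (sqrt 2 / (sqrt 2 * sqrt 2)) by (field; lra).
    rewrite Hss. field. }
  destruct (laplace_generic alpha (2*p) (2*c) r Hr HC Hq) as [K [N [HN Hmain]]].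
  exists K, N. split; auto. intros n Hn.
  destruct (Hmain n Hn) as [Hconv [rho [Hrho HX]]].
  split; auto. exists rho. split; auto. rewrite HX. f_equal.
  assert (Hn0 : 0 < n) by lra.
  assert (Hsn : 0 < sqrt n) by (apply sqrt_lt_R0; lra).
  assert (Ea : aa (2*c) r = 14/9) by (unfold aa; rewrite Hrr; unfold c; field).
  rewrite Ea, Hrr.
  assert (Ephi : exp (n * (ln (1 + 2) - (r-2*p)*(r-2*p)/(2*c))) = Rpower 3 n / exp (n/3)).
  { unfold Rpower.
    assert (Ed : exp (n*ln 3) / exp (n/3) = exp (n*ln 3 - n/3)).
    { unfold Rminus. rewrite exp_plus, exp_Ropp. field. apply Rgt_not_eq, exp_pos. }
    rewrite Ed. f_equal.
    replace (1 + 2) with 3 by field.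
    assert (Erp : (r - 2*p) * (r - 2*p) = 1/2).
    { unfold r, p. assert (E1 : sqrt 2 - 2*(1/(2*sqrt 2)) = 1/sqrt 2).
      { replace (sqrt 2) with ((sqrt 2 * sqrt 2)/sqrt 2) at 1 by (field; lra). rewrite Hss. field. lra. }
      rewrite E1.
      replace (1/sqrt 2 * (1/sqrt 2)) with (1/(sqrt 2*sqrt 2)) by (field; lra).
      rewrite Hss. field. }
    rewrite Erp. unfold c. field. }
  rewrite Ephi.
  assert (Eh : hh alpha r = Rpower 2 (alpha/2)).
  { unfold hh, r, Rpower. f_equal. rewrite Hln2. field. }
  rewrite Eh.
  assert (Esq : sqrt (2*PI/(n*(14/9))) = 3 * sqrt (PI/7) / sqrt n).
  { apply sqrt_eq_sq.
    apply Rdiv_le_0_compat. assert (0 <= sqrt (PI/7)) by apply sqrt_pos. lra. lra.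
    assert (Hp7 : sqrt (PI/7) * sqrt (PI/7) = PI/7) by (apply sqrt_sqrt; lra).
    assert (Hnn : sqrt n * sqrt n = n) by (apply sqrt_sqrt; lra).
    replace (3 * sqrt (PI/7) / sqrt n * (3 * sqrt (PI/7) / sqrt n)) with
      (9 * (sqrt (PI/7) * sqrt (PI/7)) / (sqrt n * sqrt n)) by (field; lra).
    rewrite Hp7, Hnn. field. lra. }
  rewrite Esq.
  assert (0 < exp (n/3)) by apply exp_pos.
  field. split; lra.
Qed.
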